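(* Let $(z_n)_{n\ge1}$ be real numbers in $(0,1)$ with $\sum_{n}(1-z_n)<\infty$ and $z_n\to1$, and let $B(z)=\prod_{n=1}^\infty\frac{z_n-z}{1-z_nz}=\sum_{n\ge0}a_nz^n$. With $A_n=a_0+\dots+a_n$ and $M_n=\frac{A_0+\dots+A_{n-1}}n$: if $(M_n)$ converges to some limit $c$, then $c=0$. *)

(* Defs.v *)
From Stdlib Require Export Reals.
Open Scope R_scope.

(* Partial Blaschke product  prod_{k=0}^{N} (z_k - x)/(1 - z_k x)
   (the paper's z_1, z_2, ... are z 0, z 1, ... here). *)
Definition blaschke_partial (z : nat -> R) (x : R) (N : nat) : R :=
  prod_f_R0 (fun k => (z k - x) / (1 - z k * x)) N.

Definition Apart (a : nat -> R) (n : nat) : R := sum_f_R0 a n.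

(* M_n = (A_0 + ... + A_{n-1}) / n, for n >= 1 *)
Definition Mmean (a : nat -> R) (n : nat) : R :=
  sum_f_R0 (Apart a) (pred n) / INR n.

(* Main.v *)
Require Import Defs.
From Stdlib Require Import Reals Lra Lia.
Open Scope R_scope.

Lemma decay x : 0 < x < 1 -> forall eps, 0 < eps ->
  exists N1, forall N, (N1 <= N)%nat -> INR (S (S N)) * x ^ (S N) < eps.
Proof.
  intros Hx eps Heps.
  set (y := sqrt x).
  assert (Hy0 : 0 < y) by (apply sqrt_lt_R0; lra).
  assert (Hy1 : y < 1).
  { unfold y; rewrite <- sqrt_1; apply sqrt_lt_1_alt; lra. }
  assert (Hyy : y * y = x) by (unfold y; apply sqrt_sqrt; lra).
  set (h := / y - 1).
  assert (Hh : 0 < h).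
  { unfold h. assert (1 < / y). { rewrite <- Rinv_1. apply Rinv_lt_contravar; lra. } lra. }
  assert (Hb : forall n, INR n * y ^ n < / h).
  { intro n. pose proof (poly n h Hh) as P.
    replace (1 + h) with (/ y) in P by (unfold h; ring).
    rewrite pow_inv in P.
    pose proof (pow_lt y n Hy0) as Q.
    assert (INR n * h < / y ^ n) by lra.
    apply Rmult_lt_reg_l with h; [lra|].
    rewrite Rinv_r by lra.
    apply Rmult_lt_reg_r with (/ y ^ n). apply Rinv_0_lt_compat; lra.
    replace (h * (INR n * y ^ n) * / y ^ n) with (INR n * h) by (field; lra). lra. }
  destruct (pow_lt_1_zero y ltac:(rewrite Rabs_pos_eq; lra) (eps * h)
    ltac:(apply Rmult_lt_0_compat; lra)) as [N1 HN1].
  exists N1. intros N HN.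
  assert (E : x ^ S N = y ^ (S (S N)) * y ^ N).
  { rewrite <- Hyy, <- pow_add, Rpow_mult_distr, <- pow_add. f_equal. lia. }
  rewrite E. specialize (HN1 N HN). rewrite Rabs_pos_eq in HN1 by (apply pow_le; lra).
  specialize (Hb (S (S N))). pose proof (pow_lt y N Hy0).
  apply Rle_lt_trans with (/ h * y ^ N).
  { rewrite <- Rmult_assoc. apply Rmult_le_compat_r; lra. }
  apply Rmult_lt_reg_l with h; [lra|].
  rewrite <- Rmult_assoc, Rinv_r by lra. lra.
Qed.
Lemma iden1 (a : nat -> R) x N :
  sum_f_R0 (fun n => a n * x ^ n) N =
  (1 - x) ^ 2 * sum_f_R0 (fun n => sum_f_R0 (Apart a) n * x ^ n) N
  + x ^ (S N) * ((1 - x) * sum_f_R0 (Apart a) N + Apart a N).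
Proof.
  induction N as [|N IH].
  - simpl. unfold Apart; simpl. ring.
  - cbn [sum_f_R0]. rewrite IH.
    assert (HA : Apart a (S N) = Apart a N + a (S N)) by reflexivity.
    cbn [sum_f_R0]. rewrite HA. cbn [pow]. ring.
Qed.

Lemma iden2 x N :
  (1 - x) ^ 2 * sum_f_R0 (fun n => INR (S n) * x ^ n) N =
  1 - INR (S (S N)) * x ^ (S N) + INR (S N) * x ^ (S (S N)).
Proof.
  induction N as [|N IH].
  - simpl. ring.
  - cbn [sum_f_R0]. rewrite Rmult_plus_distr_l, IH.
    rewrite !S_INR. cbn [pow]. rewrite ?S_INR. ring.
Qed.

Lemma sum_mono (h : nat -> R) : (forall n, 0 <= h n) ->
  forall m n, (m <= n)%nat -> sum_f_R0 h m <= sum_f_R0 h n.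
Proof.
  intros Hh m n Hmn. induction Hmn. lra.
  cbn [sum_f_R0]. specialize (Hh (S m0)). lra.
Qed.

Lemma sum_trunc (h : nat -> R) N0 : (forall n, 0 <= h n) ->
  (forall n, (N0 < n)%nat -> h n = 0) ->
  forall N, sum_f_R0 h N <= sum_f_R0 h N0.
Proof.
  intros Hh Hz N. induction N as [|N IH].
  - apply sum_mono; auto; lia.
  - destruct (Compare_dec.le_lt_dec (S N) N0).
    + apply sum_mono; auto.
    + cbn [sum_f_R0]. rewrite (Hz (S N)) by lia. lra.
Qed.

Lemma prod_zero (f : nat -> R) m : f m = 0 -> forall N, (m <= N)%nat -> prod_f_R0 f N = 0.
Proof.
  intros Hf N HN. induction HN.
  - destruct m; simpl; rewrite Hf; ring.
  - simpl. rewrite IHHN. ring.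
Qed.
Lemma abs4 u1 u2 u3 u4 : Rabs (u1 + u2 + u3 + u4) <= Rabs u1 + Rabs u2 + Rabs u3 + Rabs u4.
Proof.
  pose proof (Rabs_triang (u1+u2+u3) u4). pose proof (Rabs_triang (u1+u2) u3).
  pose proof (Rabs_triang u1 u2). lra.
Qed.

Lemma term_le_sum (f : nat -> R) n : (forall k, 0 <= f k) -> f n <= sum_f_R0 f n.
Proof.
  intros Hf. destruct n. simpl; lra. cbn [sum_f_R0].
  pose proof (cond_pos_sum f n Hf). lra.
Qed.

Lemma key (a : nat -> R) c x eps N0 :
  0 < x < 1 -> 0 < eps ->
  (forall n, (N0 <= n)%nat -> Rabs (Mmean a (S n) - c) < eps) ->
  forall N,
  Rabs (sum_f_R0 (fun n => a n * x ^ n) N - c) <=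
  eps + (1 - x) ^ 2 * sum_f_R0 (fun n => INR (S n) * Rabs (Mmean a (S n) - c)) N0
  + INR (S (S N)) * x ^ (S N) *
    (5 * Rabs c + 3 * (sum_f_R0 (fun n => Rabs (Mmean a (S n) - c)) N0 + eps)).
Proof.
  intros Hx Heps HN0 N.
  set (e := fun n => Mmean a (S n) - c).
  set (E := sum_f_R0 (fun n => Rabs (e n)) N0 + eps).
  set (H := sum_f_R0 (fun n => INR (S n) * Rabs (e n)) N0).
  fold e. fold E. fold H.
  assert (HS : forall n, sum_f_R0 (Apart a) n = INR (S n) * (c + e n)).
  { intro n. unfold e, Mmean. cbn [pred].
    assert (INR (S n) <> 0) by (apply not_0_INR; lia). field; auto. }
  assert (HE : forall n, Rabs (e n) <= E).
  { intro n. unfold E. destruct (Compare_dec.le_lt_dec n N0).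
    - pose proof (term_le_sum (fun n => Rabs (e n)) n ltac:(intro; apply Rabs_pos)).
      pose proof (sum_mono (fun n => Rabs (e n)) ltac:(intro; apply Rabs_pos) n N0 l).
      simpl in *. lra.
    - pose proof (HN0 n ltac:(lia)). pose proof (cond_pos_sum (fun n => Rabs (e n)) N0
        ltac:(intro; apply Rabs_pos)). change (Rabs (e n) < eps) in H0. lra. }
  set (K := Rabs c + E).
  assert (HSb : forall n, Rabs (sum_f_R0 (Apart a) n) <= INR (S n) * K).
  { intro n. rewrite HS, Rabs_mult, Rabs_pos_eq by apply pos_INR.
    apply Rmult_le_compat_l. apply pos_INR.
    pose proof (Rabs_triang c (e n)). pose proof (HE n). unfold K. lra. }
  assert (HAb : Rabs (Apart a N) <= 2 * INR (S N) * K).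
  { destruct N as [|k].
    - replace (Apart a 0) with (sum_f_R0 (Apart a) 0) by reflexivity.
      pose proof (HSb 0%nat). pose proof (Rabs_pos (sum_f_R0 (Apart a) 0)). lra.
    - replace (Apart a (S k)) with (sum_f_R0 (Apart a) (S k) + - sum_f_R0 (Apart a) k)
        by (cbn [sum_f_R0]; ring).
      pose proof (Rabs_triang (sum_f_R0 (Apart a) (S k)) (- sum_f_R0 (Apart a) k)).
      rewrite Rabs_Ropp in H0. pose proof (HSb (S k)). pose proof (HSb k).
      pose proof (S_INR (S k)). pose proof (pos_INR (S k)).
      assert (0 <= K) by (unfold K, E; pose proof (Rabs_pos c);
        pose proof (cond_pos_sum (fun n => Rabs (e n)) N0 ltac:(intro; apply Rabs_pos)); lra).
      nra. }
  set (G := sum_f_R0 (fun n => INR (S n) * x ^ n) N).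
  set (D := sum_f_R0 (fun n => INR (S n) * e n * x ^ n) N).
  assert (HSum : sum_f_R0 (fun n => sum_f_R0 (Apart a) n * x ^ n) N = c * G + D).
  { rewrite (sum_eq _ (fun n => INR (S n) * x ^ n * c + INR (S n) * e n * x ^ n)).
    - rewrite plus_sum, <- scal_sum. unfold G, D. ring.
    - intros i _. rewrite HS. ring. }
  rewrite iden1, HSum.
  pose proof (iden2 x N) as HG. fold G in HG.
  set (n1 := INR (S N)) in *. set (n2 := INR (S (S N))) in *.
  assert (Hn : n1 <= n2) by (unfold n1, n2; rewrite (S_INR (S N)); lra).
  assert (Hn1 : 0 <= n1) by apply pos_INR.
  assert (Hpx : 0 < x ^ S N) by (apply pow_lt; lra).
  assert (Hx2 : x ^ S (S N) = x * x ^ S N) by reflexivity.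
  assert (HG1 : (1 - x) ^ 2 * G <= 1).
  { rewrite HG, Hx2. assert (n1 * x <= n2) by nra. nra. }
  assert (HG0 : 0 <= G).
  { apply cond_pos_sum. intro n. apply Rmult_le_pos. apply pos_INR. apply pow_le; lra. }
  set (h := fun n => if Nat.leb n N0 then INR (S n) * Rabs (e n) else 0).
  assert (HD : Rabs D <= eps * G + H).
  { unfold D. eapply Rle_trans. apply Rsum_abs.
    apply Rle_trans with (sum_f_R0 (fun n => INR (S n) * x ^ n * eps + h n) N).
    - apply sum_Rle. intros n _.
      rewrite !Rabs_mult, (Rabs_pos_eq (INR (S n))) by apply pos_INR.
      rewrite (Rabs_pos_eq (x ^ n)) by (apply pow_le; lra).
      assert (0 <= INR (S n)) by apply pos_INR.
      assert (0 < x ^ n) by (apply pow_lt; lra).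
      assert (x ^ n <= 1) by (rewrite <- (pow1 n); apply pow_incr; lra).
      assert (0 <= Rabs (e n)) by apply Rabs_pos.
      unfold h. destruct (Nat.leb n N0) eqn:En.
      + assert (0 <= INR (S n) * Rabs (e n)) by (apply Rmult_le_pos; lra).
        assert (0 <= INR (S n) * x ^ n * eps) by (apply Rmult_le_pos; [apply Rmult_le_pos|]; lra).
        assert (INR (S n) * Rabs (e n) * x ^ n <= INR (S n) * Rabs (e n) * 1)
          by (apply Rmult_le_compat_l; lra). lra.
      + apply Nat.leb_gt in En. pose proof (HN0 n ltac:(lia)). change (Rabs (e n) < eps) in H4.
        replace (INR (S n) * Rabs (e n) * x ^ n) with ((INR (S n) * x ^ n) * Rabs (e n)) by ring.
        assert (0 <= INR (S n) * x ^ n) by (apply Rmult_le_pos; lra).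
        assert ((INR (S n) * x ^ n) * Rabs (e n) <= (INR (S n) * x ^ n) * eps)
          by (apply Rmult_le_compat_l; lra). lra.
    - rewrite plus_sum, <- scal_sum. fold G.
      assert (sum_f_R0 h N <= H).
      { apply Rle_trans with (sum_f_R0 h N0).
        - apply sum_trunc.
          + intro n. unfold h. destruct (Nat.leb n N0). apply Rmult_le_pos. apply pos_INR.
            apply Rabs_pos. lra.
          + intros n Hn0. unfold h. replace (Nat.leb n N0) with false. reflexivity.
            symmetry. apply Nat.leb_gt. lia.
        - unfold H. right. apply sum_eq. intros i Hi. unfold h.
          replace (Nat.leb i N0) with true. reflexivity. symmetry. apply Nat.leb_le. lia. }
      lra. }
  assert (HH : 0 <= H).
  { apply cond_pos_sum. intro n. apply Rmult_le_pos. apply pos_INR. apply Rabs_pos. }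
  assert (Hc2 : c * ((1 - x) ^ 2 * G) - c = c * (- n2 * x ^ S N + n1 * x ^ S (S N))).
  { rewrite HG. ring. }
  replace ((1 - x) ^ 2 * (c * G + D) + x ^ S N * ((1 - x) * sum_f_R0 (Apart a) N + Apart a N) - c)
    with ((1 - x) ^ 2 * D + x ^ S N * ((1 - x) * sum_f_R0 (Apart a) N + Apart a N
      + (- c * n2) + c * n1 * x)) by (rewrite Hx2 in Hc2; nra).
  eapply Rle_trans. apply Rabs_triang.
  rewrite !Rabs_mult, (Rabs_pos_eq ((1-x)^2)) by (apply pow_le; lra).
  rewrite (Rabs_pos_eq (x ^ S N)) by lra.
  assert (Hb : Rabs ((1 - x) * sum_f_R0 (Apart a) N + Apart a N + - c * n2 + c * n1 * x)
     <= n2 * (5 * Rabs c + 3 * E)).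
  { eapply Rle_trans. apply abs4. rewrite !Rabs_mult, Rabs_Ropp.
    rewrite (Rabs_pos_eq (1 - x)) by lra. rewrite (Rabs_pos_eq x) by lra.
    rewrite (Rabs_pos_eq n1) by lra. rewrite (Rabs_pos_eq n2) by lra.
    pose proof (HSb N). fold n1 in H0.
    pose proof (Rabs_pos c). pose proof (Rabs_pos (sum_f_R0 (Apart a) N)).
    assert (0 <= E) by (unfold E; pose proof (cond_pos_sum (fun n => Rabs (e n)) N0
        ltac:(intro; apply Rabs_pos)); lra).
    assert ((1 - x) * Rabs (sum_f_R0 (Apart a) N) <= 1 * Rabs (sum_f_R0 (Apart a) N))
      by (apply Rmult_le_compat_r; lra).
    assert (Rabs c * n1 * x <= Rabs c * n2 * 1).
    { apply Rmult_le_compat; try lra. apply Rmult_le_pos; lra. apply Rmult_le_compat_l; lra. }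
    assert (n1 * K <= n2 * K) by (apply Rmult_le_compat_r; unfold K; lra).
    unfold K in *. lra. }
  assert (HD2 : (1 - x) ^ 2 * Rabs D <= eps + (1 - x) ^ 2 * H).
  { assert (0 <= (1-x)^2) by (apply pow_le; lra). nra. }
  assert (x ^ S N * Rabs ((1 - x) * sum_f_R0 (Apart a) N + Apart a N + - c * n2 + c * n1 * x)
     <= x ^ S N * (n2 * (5 * Rabs c + 3 * E))) by (apply Rmult_le_compat_l; lra).
  unfold E, H in *; unfold e in *; lra.
Qed.

Theorem mainTheorem10
  (z : nat -> R) (B : R -> R) (a : nat -> R) (c : R)
  (hz : forall n, 0 < z n < 1)
  (hsum : exists l, Un_cv (fun N => sum_f_R0 (fun n => 1 - z n) N) l)
  (hlim : Un_cv z 1)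
  (hB : forall x, -1 < x < 1 -> Un_cv (blaschke_partial z x) (B x))
  (ha : forall x, -1 < x < 1 ->
          Un_cv (fun N => sum_f_R0 (fun n => a n * x ^ n) N) (B x))
  (hM : Un_cv (fun n => Mmean a (S n)) c) :
  c = 0.
Proof.
  assert (Hall : forall eps, 0 < eps -> Rabs c <= 4 * eps).
  { intros eps Heps. destruct (hM eps Heps) as [N0 HN0].
    assert (HN0' : forall n, (N0 <= n)%nat -> Rabs (Mmean a (S n) - c) < eps).
    { intros n Hn. apply (HN0 n). lia. }
    set (H := sum_f_R0 (fun n => INR (S n) * Rabs (Mmean a (S n) - c)) N0).
    set (E := sum_f_R0 (fun n => Rabs (Mmean a (S n) - c)) N0).
    set (L := 5 * Rabs c + 3 * (E + eps)).
    assert (HH : 0 <= H).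
    { apply cond_pos_sum. intro n. apply Rmult_le_pos. apply pos_INR. apply Rabs_pos. }
    assert (HL : 0 <= L).
    { unfold L, E. pose proof (Rabs_pos c).
      pose proof (cond_pos_sum (fun n => Rabs (Mmean a (S n) - c)) N0 ltac:(intro; apply Rabs_pos)).
      lra. }
    assert (Hd : 0 < eps / (H + 1)) by (apply Rdiv_lt_0_compat; lra).
    destruct (hlim _ Hd) as [m Hm]. specialize (Hm m (Nat.le_refl m)).
    unfold R_dist in Hm.
    set (x := z m) in *.
    assert (Hx : 0 < x < 1) by apply hz.
    assert (HB0 : B x = 0).
    { apply UL_sequence with (blaschke_partial z x). apply hB; lra.
      intros eps' He'. exists m. intros n Hn. unfold R_dist, blaschke_partial.
      rewrite (prod_zero _ m). rewrite Rminus_0_r, Rabs_R0. lra.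
      cbv beta. unfold x. replace (z m - z m) with 0 by ring. unfold Rdiv. ring.
      lia. }
    pose proof (ha x ltac:(lra)) as HT. rewrite HB0 in HT.
    destruct (HT eps Heps) as [N2 HN2].
    destruct (decay x Hx (eps / (L + 1)) ltac:(apply Rdiv_lt_0_compat; lra)) as [N1 HN1].
    set (N := Nat.max N1 N2).
    specialize (HN2 N ltac:(unfold N; lia)). unfold R_dist in HN2. rewrite Rminus_0_r in HN2.
    specialize (HN1 N ltac:(unfold N; lia)).
    pose proof (key a c x eps N0 Hx Heps HN0' N) as K. fold H E in K. fold L in K.
    set (T := sum_f_R0 (fun n => a n * x ^ n) N) in *.
    set (q := INR (S (S N)) * x ^ S N) in *.
    assert (Hq : 0 <= q).
    { unfold q. apply Rmult_le_pos. apply pos_INR. apply pow_le; lra. }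
    assert (HqL : q * L < eps).
    { apply Rle_lt_trans with (q * (L + 1)). apply Rmult_le_compat_l; lra.
      replace eps with (eps / (L + 1) * (L + 1)) by (field; lra).
      apply Rmult_lt_compat_r; lra. }
    assert (H1x : 1 - x < eps / (H + 1)).
    { rewrite Rabs_minus_sym, Rabs_pos_eq in Hm by lra. exact Hm. }
    assert (HxH : (1 - x) ^ 2 * H <= eps).
    { assert ((1 - x) ^ 2 * H <= (1 - x) * H).
      { simpl. rewrite Rmult_1_r. assert (0 <= (1 - x) * H) by (apply Rmult_le_pos; lra).
        replace ((1 - x) * (1 - x) * H) with ((1 - x) * ((1 - x) * H)) by ring.
        replace ((1 - x) * H) with (1 * ((1 - x) * H)) at 2 by ring.
        apply Rmult_le_compat_r; lra. }
      assert ((1 - x) * H <= eps / (H + 1) * H) by (apply Rmult_le_compat_r; lra).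
      assert (eps / (H + 1) * H <= eps).
      { replace (eps / (H + 1) * H) with (eps * (H / (H + 1))) by (field; lra).
        assert (H / (H + 1) <= 1).
        { apply Rmult_le_reg_r with (H + 1). lra. field_simplify; lra. }
        nra. }
      lra. }
    pose proof (Rabs_triang (c - T) T).
    replace (c - T + T) with c in H0 by ring.
    rewrite Rabs_minus_sym in H0. lra. }
  destruct (Req_dec c 0) as [|Hc]; auto.
  pose proof (Rabs_pos_lt c Hc).
  specialize (Hall (Rabs c / 8) ltac:(lra)). lra.
Qed.
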